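(* Let $\mathfrak{g}_1,\dots,\mathfrak{g}_t$ be nilpotent Lie algebras. Then (1) $\mathfrak{g}_1\underline{\times}\mathfrak{g}_2\cong\mathfrak{g}_2\underline{\times}\mathfrak{g}_1$; and (2) $(\mathfrak{g}_1\underline{\times}\mathfrak{g}_2\underline{\times}\cdots\underline{\times}\mathfrak{g}_{t-1})\underline{\times}\mathfrak{g}_t\cong\mathfrak{g}_1\underline{\times}(\mathfrak{g}_2\underline{\times}\mathfrak{g}_3\underline{\times}\cdots\underline{\times}\mathfrak{g}_t)$, where an unparenthesized iterated product is formed from left to right, $\mathfrak{h}_1\underline{\times}\cdots\underline{\times}\mathfrak{h}_k=(\mathfrak{h}_1\underline{\times}\cdots\underline{\times}\mathfrak{h}_{k-1})\underline{\times}\mathfrak{h}_k$.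
   Context: All Lie algebras are finite-dimensional, complex, nilpotent and nonabelian; $C^1\mathfrak{g}=[\mathfrak{g},\mathfrak{g}]$. Product by generators: for $\mathfrak{g}_1,\mathfrak{g}_2$ of dimensions $m_1,m_2$ take bases $\{X_1,\dots,X_{m_1}\}$, $\{X'_1,\dots,X'_{m_2}\}$ such that $X_1,\dots,X_{n_1}$ generate $\mathfrak{g}_1$ and $X_{n_1+1},\dots,X_{m_1}$ span $C^1\mathfrak{g}_1$, and similarly for $\mathfrak{g}_2$ with $n_2$ generators. Then $\mathfrak{g}_1\underline{\times}\mathfrak{g}_2$ is the Lie algebra on $\mathfrak{g}_1\oplus\mathfrak{g}_2\oplus\langle Z_1,\dots,Z_{n_1n_2}\rangle$ with the brackets of $\mathfrak{g}_1$ and of $\mathfrak{g}_2$, $[X_i,X'_j]=Z_{(i-1)n_2+j}$ for $1\le i\le n_1$, $1\le j\le n_2$, $[X_i,X'_j]=0$ if $i>n_1$ or $j>n_2$, and the $Z_k$ central. In $\mathfrak{g}_1\underline{\times}\mathfrak{g}_2$ the generators $X_1,\dots,X_{n_1},X'_1,\dots,X'_{n_2}$ are used, the remaining basis vectors (including the $Z_k$) spanning its derived algebra. *)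

(* Defs.v *)
From HB Require Import structures.
From mathcomp Require Import all_boot all_order all_algebra.
From mathcomp Require Import reals complex.
Set Implicit Arguments. Unset Strict Implicit. Unset Printing Implicit Defensive.
Import Order.TTheory GRing.Theory Num.Theory.
Local Open Scope ring_scope.

(* A finite-dimensional Lie algebra over F, given in a fixed basis
   e_0, ..., e_{ldim-1} by structure constants: [e_i, e_j] = sum_k lc i j k e_k.
   [lgen] is the number of distinguished "generators": the basis vectors
   e_0, ..., e_{lgen-1} play the role of X_1..X_n, and e_lgen, ..., e_{ldim-1}
   are meant to span the derived algebra (see [adapted_basis]).
   Structure constants at indices >= ldim are ignored. *)
Record lie (F : fieldType) := Lie {
  ldim : nat;
  lgen : nat;
  lc : nat -> nat -> nat -> F }.

Section LieDefs.
Variable F : fieldType.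
Implicit Types g h : lie F.

Definition bracket g (u v : 'rV[F]_(ldim g)) : 'rV[F]_(ldim g) :=
  \row_(k < ldim g) \sum_(i < ldim g) \sum_(j < ldim g)
     u 0 i * v 0 j * lc g i j k.

Definition is_lie g : Prop :=
  (forall u : 'rV[F]_(ldim g), bracket u u = 0) /\
  (forall u v w : 'rV[F]_(ldim g), bracket u (bracket v w) + bracket v (bracket w u)
                   + bracket w (bracket u v) = 0).

(* C^k g is spanned by the k-fold brackets [x_1,[x_2,...,[x_k,x]...]];
   g is nilpotent iff C^k g = 0 for some k. *)
Definition nilpotent g : Prop :=
  exists k, forall (x : 'rV[F]_(ldim g)) (s : seq 'rV[F]_(ldim g)),
    size s = k -> foldr (@bracket g) x s = 0.

Definition nonabelian g : Prop := exists u v : 'rV[F]_(ldim g), bracket u v != 0.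

Definition basis_vec g (i : 'I_(ldim g)) : 'rV[F]_(ldim g) := delta_mx 0 i.

(* the last ldim - lgen basis vectors span C^1 g = [g, g]
   (and hence, g being nilpotent, the first lgen ones generate g) *)
Definition adapted_basis g : Prop :=
  (lgen g <= ldim g)%N /\
  (\sum_(i < ldim g) \sum_(j < ldim g) <<@bracket g (basis_vec i) (basis_vec j)>>
     == \sum_(k < ldim g | (lgen g <= k)%N) <<basis_vec k>>)%MS.

Definition good g : Prop :=
  [/\ is_lie g, nilpotent g, nonabelian g & adapted_basis g].

Definition lie_iso g h : Prop :=
  exists A : 'M[F]_(ldim g, ldim h),
    [/\ row_free A, row_full A &
        forall u v : 'rV[F]_(ldim g), bracket u v *m A = bracket (u *m A) (v *m A)].

(* New basis order:
     X_1..X_n1, X'_1..X'_n2, X_{n1+1}..X_m1, X'_{n2+1}..X'_m2, Z_1..Z_{n1 n2}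
   (0-based indices below); generators of the product are the first n1+n2. *)
Section Prod.
Variables g1 g2 : lie F.
Let m1 := ldim g1. Let n1 := lgen g1. Let m2 := ldim g2. Let n2 := lgen g2.
Let p := (m1 - n1)%N. Let q := (m2 - n2)%N.

Definition in1 (x : nat) : bool :=
  (x < n1)%N || ((n1 + n2 <= x)%N && (x < n1 + n2 + p)%N).
Definition inv1 (x : nat) : nat := if (x < n1)%N then x else (x - n2)%N.
Definition in2 (x : nat) : bool :=
  ((n1 <= x)%N && (x < n1 + n2)%N) ||
  ((n1 + n2 + p <= x)%N && (x < n1 + n2 + p + q)%N).
Definition inv2 (x : nat) : nat :=
  if (x < n1 + n2)%N then (x - n1)%N else (x - (n1 + n2 + p) + n2)%N.
(* index of Z_{(i-1) n2 + j} for 0-based i < n1, j < n2 *)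
Definition zidx (i j : nat) : nat := (n1 + n2 + p + q + i * n2 + j)%N.
Definition isgen1 (x : nat) : bool := (x < n1)%N.
Definition isgen2 (x : nat) : bool := (n1 <= x)%N && (x < n1 + n2)%N.

Definition prod_lc (x y k : nat) : F :=
  if [&& in1 x, in1 y & in1 k] then lc g1 (inv1 x) (inv1 y) (inv1 k)
  else if [&& in2 x, in2 y & in2 k] then lc g2 (inv2 x) (inv2 y) (inv2 k)
  else if [&& isgen1 x, isgen2 y & k == zidx x (y - n1)] then 1
  else if [&& isgen1 y, isgen2 x & k == zidx y (x - n1)] then -1
  else 0.

Definition lprod : lie F := Lie (m1 + m2 + n1 * n2) (n1 + n2) prod_lc.
End Prod.

Definition iprod (g : nat -> lie F) (a k : nat) : lie F :=
  foldl (fun acc i => lprod acc (g i)) (g a) (iota a.+1 k).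

End LieDefs.

(* Main.v *)
Require Import Defs.
From HB Require Import structures.
From mathcomp Require Import all_boot all_order all_algebra.
From mathcomp Require Import reals complex.
From mathcomp Require Import zify ring.
Set Implicit Arguments. Unset Strict Implicit. Unset Printing Implicit Defensive.
Import Order.TTheory GRing.Theory Num.Theory.
Local Open Scope ring_scope.



Inductive pidx := P1 of nat | P2 of nat | PZ of nat & nat.

Section Enc.
Variable F : fieldType.
Variables g1 g2 : lie F.
Local Notation m1 := (ldim g1). Local Notation n1 := (lgen g1).
Local Notation m2 := (ldim g2). Local Notation n2 := (lgen g2).
Hypothesis h1 : (n1 <= m1)%N.
Hypothesis h2 : (n2 <= m2)%N.

Definition penc (d : pidx) : nat :=
  match d with
  | P1 a => if (a < n1)%N then a else (a + n2)%N
  | P2 b => if (b < n2)%N then (n1 + b)%N else (b + n1 + (m1 - n1))%N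
  | PZ i j => (m1 + m2 + i * n2 + j)%N
  end.

Definition pdec (x : nat) : pidx :=
  if (x < n1)%N then P1 x else if (x < n1 + n2)%N then P2 (x - n1)
  else if (x < m1 + n2)%N then P1 (x - n2) else if (x < m1 + m2)%N then P2 (x - m1)
  else PZ ((x - (m1 + m2)) %/ n2) ((x - (m1 + m2)) %% n2).

Definition pvalid (d : pidx) : bool :=
  match d with P1 a => (a < m1)%N | P2 b => (b < m2)%N | PZ i j => (i < n1)%N && (j < n2)%N end.

Definition pgen (d : pidx) : bool :=
  match d with P1 a => (a < n1)%N | P2 b => (b < n2)%N | PZ _ _ => false end.

Definition gz (dx dy dk : pidx) : bool :=
  match dx, dy, dk with
  | P1 a, P2 b, PZ i j => [&& (a < n1)%N, (b < n2)%N, i == a & j == b]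
  | _, _, _ => false end.

Definition plc (dx dy dk : pidx) : F :=
  match dx, dy, dk with
  | P1 a, P1 b, P1 c => lc g1 a b c
  | P2 a, P2 b, P2 c => lc g2 a b c
  | _, _, _ => if gz dx dy dk then 1 else if gz dy dx dk then -1 else 0
  end.

Lemma ldim_prod : ldim (lprod g1 g2) = (m1 + m2 + n1 * n2)%N.
Proof. by []. Qed.

Lemma penc_lt d : pvalid d -> (penc d < m1 + m2 + n1 * n2)%N.
Proof.
case: d => [a|b|i j] /=; try (case: ifP => ?); try lia.
case/andP => hi hj. have : (i.+1 * n2 <= n1 * n2)%N by rewrite leq_mul2r hi orbT.
rewrite mulSn. lia.
Qed.

Lemma penc_gen d : pvalid d -> (penc d < n1 + n2)%N = pgen d.
Proof. case: d => [a|b|i j] /=; try (case: ifP => ?); lia. Qed.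

Lemma pdecK x : (x < m1 + m2 + n1 * n2)%N -> pvalid (pdec x) /\ penc (pdec x) = x.
Proof.
move=> hx; rewrite /pdec.
case: ifP => ?; first by rewrite /= ifT //; lia.
case: ifP => ?; first by rewrite /= ifT; lia.
case: ifP => ?; first by rewrite /= ifF; lia.
case: ifP => ?; first by rewrite /= ifF; lia.
have n2p : (0 < n2)%N by case: (posnP n2) => // e; move: hx; rewrite e; lia.
set r := (x - (m1 + m2))%N.
have hr : (r < n1 * n2)%N by rewrite /r; lia.
split => /=.
  by rewrite ltn_pmod // andbT ltn_divLR.
have := divn_eq r n2. rewrite /r. lia.
Qed.

Lemma pencK d : pvalid d -> pdec (penc d) = d.
Proof.
rewrite /pdec; case: d => [a|b|i j] /= hv.
- case: (boolP (a < n1)%N) => ha; rewrite ?ha ?(negbTE ha) //.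
  rewrite ifF; last lia. rewrite ifF; last lia. rewrite ifT; last lia. congr P1; lia.
- case: (boolP (b < n2)%N) => hb; rewrite ?hb ?(negbTE hb).
  rewrite ifF; last lia. rewrite ifT; last lia. congr P2; lia.
  rewrite ifF; last lia. rewrite ifF; last lia. rewrite ifF; last lia. rewrite ifT; last lia. congr P2; lia.
- case/andP: hv => hi hj.
  rewrite ifF; last lia. rewrite ifF; last lia. rewrite ifF; last lia. rewrite ifF; last lia.
  have -> : (m1 + m2 + i * n2 + j - (m1 + m2) = i * n2 + j)%N by lia.
  have n2p : (0 < n2)%N by lia.
  by rewrite divnMDl // divn_small // addn0 modnMDl modn_small.
Qed.

Lemma in1E d : pvalid d -> in1 g1 g2 (penc d) = (if d is P1 _ then true else false).
Proof. rewrite /in1; case: d => [a|b|i j] /=; try case: ifP; lia. Qed.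
Lemma in2E d : pvalid d -> in2 g1 g2 (penc d) = (if d is P2 _ then true else false).
Proof. rewrite /in2; case: d => [a|b|i j] /=; try case: ifP; lia. Qed.
Lemma inv1E a : (a < m1)%N -> inv1 g1 g2 (penc (P1 a)) = a.
Proof. rewrite /inv1 /= => ?; case: (boolP (a < n1)%N) => ha; rewrite ?ha ?(negbTE ha) //; rewrite ifF; lia. Qed.
Lemma inv2E b : (b < m2)%N -> inv2 g1 g2 (penc (P2 b)) = b.
Proof. rewrite /inv2 /= => ?; case: (boolP (b < n2)%N) => hb; rewrite ?hb ?(negbTE hb); [rewrite ifT|rewrite ifF]; lia. Qed.
Lemma isgen1E d : pvalid d -> isgen1 g1 (penc d) = (if d is P1 a then (a < n1)%N else false).
Proof. rewrite /isgen1; case: d => [a|b|i j] /=; try case: ifP; lia. Qed.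
Lemma isgen2E d : pvalid d -> isgen2 g1 g2 (penc d) = (if d is P2 b then (b < n2)%N else false).
Proof. rewrite /isgen2; case: d => [a|b|i j] /=; try case: ifP; lia. Qed.
Lemma penc_inj d d' : pvalid d -> pvalid d' -> penc d = penc d' -> d = d'.
Proof. by move=> h h' e; rewrite -(pencK h) -(pencK h') e. Qed.

Lemma zidxE d i j : pvalid d -> (i < n1)%N -> (j < n2)%N ->
  (penc d == zidx g1 g2 i j) = (if d is PZ i' j' then (i' == i) && (j' == j) else false).
Proof.
move=> hd hi hj; have hv : pvalid (PZ i j) by rewrite /= hi hj.
rewrite (_ : zidx g1 g2 i j = penc (PZ i j)); last by rewrite /zidx /=; lia.
case: eqP => [/(penc_inj hd hv) -> | ne]; first by rewrite !eqxx.
case: d hd ne => // i' j' _ ne; apply/esym/andP => -[/eqP ei /eqP ej]; subst; exact: ne.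

Qed.

Lemma cond3E dx dy dk : pvalid dx -> pvalid dy -> pvalid dk ->
  [&& isgen1 g1 (penc dx), isgen2 g1 g2 (penc dy) &
      penc dk == zidx g1 g2 (penc dx) (penc dy - n1)] = gz dx dy dk.
Proof.
move=> hx hy hk; rewrite (isgen1E hx) (isgen2E hy).
case: dx hx => [a|a|a a'] ha //=; case: dy hy => [b|b|b b'] hb //=; rewrite ?andbF //.
case: (boolP (a < n1)%N) => han //=; case: (boolP (b < n2)%N) => hbn //=; rewrite ?andbF //.
  2-4: by case: dk hk.
rewrite (_ : (n1 + b - n1 = b)%N); last lia.
rewrite zidxE //.
Qed.

Lemma prod_lc_enc dx dy dk : pvalid dx -> pvalid dy -> pvalid dk ->
  lc (lprod g1 g2) (penc dx) (penc dy) (penc dk) = plc dx dy dk.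
Proof.
move=> hx hy hk; rewrite /= /prod_lc (in1E hx) (in1E hy) (in1E hk)
  (in2E hx) (in2E hy) (in2E hk) (cond3E hx hy hk) (cond3E hy hx hk).
case: dx hx => [a|a|a a'] hx; case: dy hy => [b|b|b b'] hy; case: dk hk => [c|c|c c'] hk //=;
  by rewrite ?inv1E ?inv2E.
Qed.

End Enc.


Lemma iso_of_perm (F : fieldType) (g h : lie F) (sg : nat -> nat) (s : nat -> F) :
  ldim g = ldim h ->
  (forall x, (x < ldim g)%N -> (sg x < ldim h)%N) ->
  (forall x y, (x < ldim g)%N -> (y < ldim g)%N -> sg x = sg y -> x = y) ->
  (forall x, (x < ldim g)%N -> s x != 0) ->
  (forall i j k, (i < ldim g)%N -> (j < ldim g)%N -> (k < ldim g)%N ->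
     s k * lc g i j k = s i * s j * lc h (sg i) (sg j) (sg k)) ->
  lie_iso g h.
Proof.
move=> e hsg inj hs hlc.
pose f (i : 'I_(ldim g)) : 'I_(ldim h) := Ordinal (hsg i (ltn_ord i)).
have finj : injective f.
  by move=> i j /(congr1 val) /= /inj ij; apply: val_inj; apply: ij.
have [fi fK fiK] : bijective f.
  pose c := cast_ord (esym e).
  have /injF_bij [k kK Kk] : injective (c \o f).
    by move=> x y /= /cast_ord_inj /finj.
  exists (k \o c) => [x|y] /=; first exact: kK.
  by apply: (@cast_ord_inj _ _ (esym e)); apply: Kk.
pose A := \matrix_(i < ldim g, j < ldim h) (if f i == j then s i else 0).
have Ae i j : A i j = if f i == j then s i else 0 by rewrite mxE.
have rowA (u : 'rV[F]_(ldim g)) i : (u *m A) 0 (f i) = u 0 i * s i.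
  rewrite mxE (bigD1 i) //= big1 ?addr0; first by rewrite Ae eqxx.
  by move=> j hj; rewrite Ae (inj_eq finj) (negbTE hj) mulr0.
have hfree : row_free A.
  apply/row_freeP; exists (\matrix_(j, i) (if f i == j then (s i)^-1 else 0)).
  apply/matrixP => i i'; rewrite !mxE (bigD1 (f i)) //= big1 ?addr0.
    rewrite Ae !mxE eqxx (inj_eq finj); case: (eqVneq i' i) => [->|ne].
      by rewrite divff // hs.
    by rewrite mulr0.
  by move=> j hj; rewrite Ae (eq_sym (f i)) (negbTE hj) mul0r.
exists A; split => //.
  by move: hfree; rewrite /row_free /row_full => /eqP ->; rewrite e.
move=> u v; apply/rowP => j.
rewrite -(fiK j) rowA mxE [RHS]mxE.
rewrite (reindex f) /=; last exact: (onW_bij _ (Bijective fK fiK)).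
rewrite mulr_suml; apply: eq_bigr => i _.
rewrite (reindex f) /=; last exact: (onW_bij _ (Bijective fK fiK)).
rewrite mulr_suml; apply: eq_bigr => i' _.
rewrite !rowA.
have := hlc i i' (fi j) (ltn_ord _) (ltn_ord _) (ltn_ord _).
rewrite /= => H.
transitivity (u 0 i * v 0 i' * (s (fi j) * lc g i i' (fi j))); first by ring.
rewrite H; ring.
Qed.


Arguments penc : simpl never.

Ltac if_split := repeat match goal with |- context [if ?b then _ else _] =>
  lazymatch b with context [if _ then _ else _] => fail | _ =>
    let E := fresh "E" in destruct b eqn:E end end.
Ltac close_if := if_split; rewrite ?mul1r ?mulr1 ?mulr0 ?mul0r ?oppr0 ?opprK ?mulN1r ?mulrN1 ?mulrN ?mulNr; try reflexivity; exfalso; lia.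

Section Swap.
Variable F : fieldType.
Variables A B : lie F.
Hypothesis hA : (lgen A <= ldim A)%N.
Hypothesis hB : (lgen B <= ldim B)%N.

Definition swp (d : pidx) := match d with P1 a => P2 a | P2 b => P1 b | PZ i j => PZ j i end.

Lemma swap_iso : lie_iso (lprod A B) (lprod B A).
Proof.
apply: (@iso_of_perm _ _ _ (fun x => penc B A (swp (pdec A B x)))
   (fun x => if pdec A B x is PZ _ _ then -1 else 1)).
- rewrite /=; lia.
- move=> x hx; have [v _] := pdecK hA hB hx.
  have := @penc_lt _ B A hB hA (swp (pdec A B x)); rewrite /=.
  move=> H; have : (penc B A (swp (pdec A B x)) < ldim B + ldim A + lgen B * lgen A)%N.
    by apply: H; case: (pdec A B x) v => //= i j; rewrite andbC.
  lia.
- move=> x y hx hy.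
  have [vx ex] := pdecK hA hB hx; have [vy ey] := pdecK hA hB hy.
  have sv : forall d, pvalid A B d -> pvalid B A (swp d).
    by case=> //= i j; rewrite andbC.
  move/(penc_inj hB hA (sv _ vx) (sv _ vy)) => e.
  have swK : forall d, swp (swp d) = d by case.
  by rewrite -ex -ey -(swK (pdec A B x)) e swK.
- by move=> x _; case: (pdec A B x); rewrite ?oppr_eq0 oner_eq0.
- move=> i j k hi hj hk.
  have [vi ei] := pdecK hA hB hi; have [vj ej] := pdecK hA hB hj; have [vk ek] := pdecK hA hB hk.
  have sv : forall d, pvalid A B d -> pvalid B A (swp d).
    by case=> //= i' j'; rewrite andbC.
  rewrite -[X in lc _ X _ _]ei -[X in lc _ _ X _]ej -[X in lc _ _ _ X]ek prod_lc_enc //.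
  rewrite prod_lc_enc ?sv //.
  move: vi vj vk.
  case: (pdec A B i) => [a|a|a a']; case: (pdec A B j) => [b|b|b b']; case: (pdec A B k) => [c|c|c c'];
  move=> /= vi vj vk; rewrite /= ?mulr1 ?mul1r ?mulrN ?mulNr ?opprK ?mulr1; close_if.
Qed.
End Swap.




Definition siso (F : fieldType) (g h : lie F) := exists sg : nat -> nat,
  [/\ ldim g = ldim h /\ lgen g = lgen h,
   forall x, (x < ldim g)%N -> (sg x < ldim g)%N,
   forall x y, (x < ldim g)%N -> (y < ldim g)%N -> sg x = sg y -> x = y,
   forall x, (x < ldim g)%N -> (sg x < lgen g)%N = (x < lgen g)%N &
   forall i j k, (i < ldim g)%N -> (j < ldim g)%N -> (k < ldim g)%N ->
     lc g i j k = lc h (sg i) (sg j) (sg k)].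

Section Siso.
Variable F : fieldType.

Lemma siso_iso (g h : lie F) : siso g h -> lie_iso g h.
Proof.
case=> sg [[e _] hs inj _ hlc].
apply: (@iso_of_perm _ _ _ sg (fun _ => 1)) => //.
- by move=> x hx; rewrite -e; apply: hs.
- by move=> *; rewrite oner_eq0.
- by move=> i j k hi hj hk; rewrite !mul1r; apply: hlc.
Qed.

Lemma siso_refl (g : lie F) : siso g g.
Proof. by exists id; split. Qed.

Lemma siso_trans (g h l : lie F) : siso g h -> siso h l -> siso g l.
Proof.
case=> s1 [[e1 n1] hs1 inj1 gen1 lc1]; case=> s2 [[e2 n2] hs2 inj2 gen2 lc2].
exists (s2 \o s1); split => /=.
- by rewrite e1 n1.
- by move=> x hx; rewrite e1; apply: hs2; rewrite -e1; apply: hs1.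
- move=> x y hx hy /inj2 e; apply: inj1 => //; apply: e; rewrite -e1; exact: hs1.
- move=> x hx; have h1 : (s1 x < ldim h)%N by rewrite -e1 hs1.
  by rewrite n1 gen2 // -n1 gen1.
- move=> i j k hi hj hk; rewrite lc1 // lc2 // -e1; exact: hs1.
Qed.
End Siso.

Section Congr.
Variable F : fieldType.
Variables A A' C : lie F.
Hypothesis hA : (lgen A <= ldim A)%N.
Hypothesis hC : (lgen C <= ldim C)%N.

Lemma siso_congr : siso A A' -> siso (lprod A C) (lprod A' C).
Proof.
case=> s [[e n] hs inj gen hlc].
have hA' : (lgen A' <= ldim A')%N by rewrite -e -n.
pose fm d := match d with P1 a => P1 (s a) | P2 c => P2 c | PZ i j => PZ (s i) j end.
have seq : forall a b, (a < ldim A)%N -> (b < ldim A)%N -> (s a == s b) = (a == b).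
  by move=> a b ha hb; apply/eqP/eqP => [/inj|->]; [apply|].
have fv : forall d, pvalid A C d -> pvalid A' C (fm d).
  case=> [a|c|i j] //=; first by rewrite -e; apply: hs.
  case/andP => hi hj; rewrite hj andbT -n gen //; lia.
have fi : forall d d', pvalid A C d -> pvalid A C d' -> fm d = fm d' -> d = d'.
  case=>[a|c|i j]; case=>[a'|c'|i' j'] //= v v' [].
  - by move/inj => ->.
  - move/andP: v => [vi vj]; move/andP: v' => [vi' vj'].
    by move=> e1 ->; rewrite (inj i i') //; lia.
have pg : forall d, pvalid A C d -> pgen A' C (fm d) = pgen A C d.
  by case=> [a|c|i j] //= v; rewrite -n gen.
exists (fun x => penc A' C (fm (pdec A C x))); split.
- by rewrite /= e n.
- move=> x hx; have [v _] := pdecK hA hC hx.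
  by have := penc_lt hA' hC (fv _ v); rewrite /= -e -n.
- move=> x y hx hy.
  have [vx ex] := pdecK hA hC hx; have [vy ey] := pdecK hA hC hy.
  move/(penc_inj hA' hC (fv _ vx) (fv _ vy))/(fi _ _ vx vy) => ee.
  by rewrite -ex -ey ee.
- move=> x hx; have [v ex] := pdecK hA hC hx.
  have gx := penc_gen hA hC v; rewrite ex in gx.
  by rewrite /= gx n (penc_gen hA' hC (fv _ v)) pg.
- move=> i j k hi hj hk.
  have [vi ei] := pdecK hA hC hi; have [vj ej] := pdecK hA hC hj; have [vk ek] := pdecK hA hC hk.
  rewrite -[X in lc _ X _ _]ei -[X in lc _ _ X _]ej -[X in lc _ _ _ X]ek prod_lc_enc //.
  rewrite prod_lc_enc ?fv //.
  move: vi vj vk.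
  case: (pdec A C i) => [a|a|a a']; case: (pdec A C j) => [b|b|b b']; case: (pdec A C k) => [c|c|c c'];
  move=> /= vi vj vk; rewrite /=; try reflexivity.
  - exact: hlc.
  - case/andP: vk => vk1 vk2.
    by rewrite -n gen // seq //; lia.
  - case/andP: vk => vk1 vk2.
    by rewrite -n gen // seq //; lia.
Qed.
End Congr.




Inductive tidx := TA of nat | TB of nat | TC of nat
  | ZAB of nat & nat | ZAC of nat & nat | ZBC of nat & nat.

Section Assoc.
Variable F : fieldType.
Variables A B C : lie F.
Hypothesis hA : (lgen A <= ldim A)%N.
Hypothesis hB : (lgen B <= ldim B)%N.
Hypothesis hC : (lgen C <= ldim C)%N.
Local Notation AB := (lprod A B).
Local Notation BC := (lprod B C).
Local Notation nA := (lgen A). Local Notation nB := (lgen B). Local Notation nC := (lgen C).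
Local Notation mA := (ldim A). Local Notation mB := (ldim B). Local Notation mC := (ldim C).

Lemma hAB : (lgen AB <= ldim AB)%N. Proof. rewrite /=; lia. Qed.
Lemma hBC : (lgen BC <= ldim BC)%N. Proof. rewrite /=; lia. Qed.

Definition tvalid d := match d with
  | TA a => (a < mA)%N | TB b => (b < mB)%N | TC c => (c < mC)%N
  | ZAB i j => (i < nA)%N && (j < nB)%N
  | ZAC i k => (i < nA)%N && (k < nC)%N
  | ZBC j k => (j < nB)%N && (k < nC)%N end.
Definition tgen d := match d with
  | TA a => (a < nA)%N | TB b => (b < nB)%N | TC c => (c < nC)%N | _ => false end.

Definition gz3 dx dy dk := match dx, dy, dk with
  | TA a, TB b, ZAB i j => [&& (a < nA)%N, (b < nB)%N, i == a & j == b]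
  | TA a, TC c, ZAC i k => [&& (a < nA)%N, (c < nC)%N, i == a & k == c]
  | TB b, TC c, ZBC j k => [&& (b < nB)%N, (c < nC)%N, j == b & k == c]
  | _, _, _ => false end.
Definition lc3 dx dy dk : F := match dx, dy, dk with
  | TA a, TA b, TA c => lc A a b c
  | TB a, TB b, TB c => lc B a b c
  | TC a, TC b, TC c => lc C a b c
  | _, _, _ => if gz3 dx dy dk then 1 else if gz3 dy dx dk then -1 else 0 end.

Definition outL d := match d with
  | TA a => P1 (penc A B (P1 a)) | TB b => P1 (penc A B (P2 b)) | TC c => P2 c
  | ZAB i j => P1 (penc A B (PZ i j)) | ZAC i k => PZ i k | ZBC j k => PZ (nA + j) k end.
Definition encL d := penc AB C (outL d).
Definition decL x := match pdec AB C x with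
  | P1 u => match pdec A B u with P1 a => TA a | P2 b => TB b | PZ i j => ZAB i j end
  | P2 c => TC c
  | PZ i k => if (i < nA)%N then ZAC i k else ZBC (i - nA) k end.

Definition outR d := match d with
  | TA a => P1 a | TB b => P2 (penc B C (P1 b)) | TC c => P2 (penc B C (P2 c))
  | ZAB i j => PZ i j | ZAC i k => PZ i (nB + k) | ZBC j k => P2 (penc B C (PZ j k)) end.
Definition encR d := penc A BC (outR d).
Definition decR x := match pdec A BC x with
  | P1 a => TA a
  | P2 v => match pdec B C v with P1 b => TB b | P2 c => TC c | PZ j k => ZBC j k end
  | PZ i w => if (w < nB)%N then ZAB i w else ZAC i (w - nB) end.

Lemma outL_valid d : tvalid d -> pvalid AB C (outL d).
Proof.
case: d => [a|b|c|i j|i k|j k] /= v; try (apply: penc_lt => //); try lia.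
Qed.

Lemma outR_valid d : tvalid d -> pvalid A BC (outR d).
Proof.
case: d => [a|b|c|i j|i k|j k] /= v; try (apply: penc_lt => //); try lia.
Qed.

Lemma decL_spec x : (x < ldim (lprod AB C))%N -> tvalid (decL x) /\ encL (decL x) = x.
Proof.
move=> hx; have [v e] := pdecK hAB hC hx.
rewrite /decL /encL; move: v e; case: (pdec AB C x) => [u|c|i k] /= v e.
- have [v' e'] := pdecK hA hB v.
  move: v' e'; case: (pdec A B u) => [a|b|i j] /= v' e'; by rewrite e'.
- by [].
- case: ifP => hi /=.
    by move/andP: v => [_ ->]; rewrite hi.
  rewrite subnKC; last lia.
  move/andP: v => [v1 ->]; split => //; lia.
Qed.

Lemma decR_encR d : tvalid d -> decR (encR d) = d.
Proof.
move=> v; rewrite /decR /encR pencK ?outR_valid //.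
case: d v => [a|b|c|i j|i k|j k] //= v; rewrite ?pencK //=.
- by case/andP: v => _ ->.
- rewrite ifF; last lia. congr ZAC; lia.
exact: hBC. Qed.

Lemma encR_lt d : tvalid d -> (encR d < ldim (lprod A BC))%N.
Proof. by move=> v; apply: penc_lt => //; [apply: hBC | apply: outR_valid]. Qed.

Lemma encL_gen d : tvalid d -> (encL d < lgen (lprod AB C))%N = tgen d.
Proof.
move=> v; rewrite /encL penc_gen ?hAB ?outL_valid //.
case: d v => [a|b|c|i j|i k|j k] //= v; rewrite ?penc_gen //.
Qed.

Lemma encR_gen d : tvalid d -> (encR d < lgen (lprod A BC))%N = tgen d.
Proof.
move=> v; rewrite /encR penc_gen ?hBC ?outR_valid //.
case: d v => [a|b|c|i j|i k|j k] //= v; rewrite ?penc_gen //.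
Qed.

Ltac close_if2 := if_split; try reflexivity; exfalso; lia.

Lemma prod_lc_enc' (g1 g2 : lie F) dx dy dk :
  (lgen g1 <= ldim g1)%N -> (lgen g2 <= ldim g2)%N ->
  pvalid g1 g2 dx -> pvalid g1 g2 dy -> pvalid g1 g2 dk ->
  prod_lc g1 g2 (penc g1 g2 dx) (penc g1 g2 dy) (penc g1 g2 dk) = plc g1 g2 dx dy dk.
Proof. by move=> h1 h2; apply: prod_lc_enc. Qed.

Lemma lcL dx dy dk : tvalid dx -> tvalid dy -> tvalid dk ->
  lc (lprod AB C) (encL dx) (encL dy) (encL dk) = lc3 dx dy dk.
Proof.
move=> vx vy vk; rewrite /encL prod_lc_enc ?hAB ?outL_valid //.
move: vx vy vk.
case: dx => [a|a|a|a a'|a a'|a a'];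
case: dy => [b|b|b|b b'|b b'|b b'];
case: dk => [c|c|c|c c'|c c'|c c'] => /= vx vy vk;
rewrite /= ?prod_lc_enc' //= /penc /=; try close_if2.
Qed.

Lemma lcR dx dy dk : tvalid dx -> tvalid dy -> tvalid dk ->
  lc (lprod A BC) (encR dx) (encR dy) (encR dk) = lc3 dx dy dk.
Proof.
move=> vx vy vk; rewrite /encR prod_lc_enc ?hBC ?outR_valid //.
move: vx vy vk.
case: dx => [a|a|a|a a'|a a'|a a'];
case: dy => [b|b|b|b b'|b b'|b b'];
case: dk => [c|c|c|c c'|c c'|c c'] => /= vx vy vk;
rewrite /= ?prod_lc_enc' //= /penc /=; try close_if2.
Qed.

Lemma siso_assoc : siso (lprod AB C) (lprod A BC).
Proof.
have ed : ldim (lprod AB C) = ldim (lprod A BC).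
  by rewrite /= !mulnDl !mulnDr; lia.
have eg : lgen (lprod AB C) = lgen (lprod A BC) by rewrite /= addnA.
exists (fun x => encR (decL x)); split => //.
- move=> x hx; have [v _] := decL_spec hx; rewrite ed; exact: encR_lt.
- move=> x y hx hy e.
  have [vx ex] := decL_spec hx; have [vy ey] := decL_spec hy.
  have : decR (encR (decL x)) = decR (encR (decL y)) by rewrite e.
  rewrite !decR_encR // => ee; by rewrite -ex -ey ee.
- move=> x hx; have [v ex] := decL_spec hx.
  by rewrite eg encR_gen // -(encL_gen v) ex eg.
- move=> i j k hi hj hk.
  have [vi ei] := decL_spec hi; have [vj ej] := decL_spec hj; have [vk ek] := decL_spec hk.
  rewrite -[X in lc _ X _ _]ei -[X in lc _ _ X _]ej -[X in lc _ _ _ X]ek lcL // lcR //.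
Qed.

End Assoc.

Lemma iprodS (F : fieldType) (g : nat -> lie F) a k :
  iprod g a k.+1 = lprod (iprod g a k) (g (a.+1 + k)%N).
Proof. by rewrite /iprod -[k.+1]addn1 iotaD foldl_cat. Qed.

Lemma lprod_ok (F : fieldType) (A B : lie F) :
  (lgen A <= ldim A)%N -> (lgen B <= ldim B)%N -> (lgen (lprod A B) <= ldim (lprod A B))%N.
Proof. rewrite /=; lia. Qed.

Lemma iprod_ok (F : fieldType) (g : nat -> lie F) a k :
  (forall i, (a <= i <= a + k)%N -> (lgen (g i) <= ldim (g i))%N) ->
  (lgen (iprod g a k) <= ldim (iprod g a k))%N.
Proof.
elim: k => [|k IH] H.
  by apply: H; rewrite addn0 leqnn.
rewrite iprodS; apply: lprod_ok.
  by apply: IH => i hi; apply: H; lia.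
by apply: H; lia.
Qed.

Lemma claim (F : fieldType) (g : nat -> lie F) k :
  (forall i, (1 <= i <= k + 2)%N -> (lgen (g i) <= ldim (g i))%N) ->
  siso (lprod (iprod g 1 k) (g (k + 2)%N)) (lprod (g 1%N) (iprod g 2 k)).
Proof.
elim: k => [|k IH] H.
  exact: siso_refl.
have ok : forall i, (1 <= i <= k + 2)%N -> (lgen (g i) <= ldim (g i))%N.
  by move=> i hi; apply: H; lia.
apply: (siso_trans (h := lprod (lprod (g 1%N) (iprod g 2 k)) (g (k.+1 + 2)%N))).
  rewrite iprodS (_ : (2 + k = k + 2)%N); last lia.
  apply: siso_congr; last exact: IH.
    apply: lprod_ok; first by apply: iprod_ok => i hi; apply: ok; lia.
    by apply: ok; lia.
  by apply: H; lia.
rewrite iprodS (_ : (3 + k = k.+1 + 2)%N); last lia.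
apply: siso_assoc.
- by apply: H; lia.
- by apply: iprod_ok => i hi; apply: H; lia.
- by apply: H; lia.
Qed.

Unset Implicit Arguments.
Theorem mainTheorem5 (R : realType) (t : nat) (g : nat -> lie R[i]) :
  (2 <= t)%N ->
  (forall i, (1 <= i <= t)%N -> good (g i)) ->
  lie_iso (lprod (g 1%N) (g 2%N)) (lprod (g 2%N) (g 1%N)) /\
  lie_iso (lprod (iprod g 1 (t - 2)) (g t))
          (lprod (g 1%N) (iprod g 2 (t - 2))).
Proof.
move=> ht H.
have ok : forall i, (1 <= i <= t)%N -> (lgen (g i) <= ldim (g i))%N.
  by move=> i /H [_ _ _ []].
split.
  by apply: swap_iso; apply: ok; lia.
apply: siso_iso.
have := @claim _ g (t - 2) (fun i hi => ok i ltac:(lia)).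
by rewrite (_ : (t - 2 + 2 = t)%N); last lia.
Qed.
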